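(* Let $m$ be a positive integer and $e$ an integer with $1<e<3^m-1$. If $x^e$ is APN over $\mathrm{GF}(3^m)$, then the ternary cyclic code $\mathcal{C}_{(1,e)}$ has parameters $[3^m-1,\,3^m-1-2m,\,4]$.
   Context: Let $q=3^m$, $n=q-1$, $\alpha$ a generator of $\mathrm{GF}(q)^*$, and $m_a(x)$ the minimal polynomial of $a\in\mathrm{GF}(q)$ over $\mathrm{GF}(3)$. $C_j$ denotes the $3$-cyclotomic coset modulo $n$ containing $j$, i.e. $\{j,3j,3^2j,\dots\}$ mod $n$. For $1<e<q-1$ with $e\notin C_1$, $\mathcal{C}_{(1,e)}$ is the cyclic code of length $n$ over $\mathrm{GF}(3)$ with generator polynomial $m_\alpha(x)m_{\alpha^e}(x)$ (when $x^e$ is APN one has $e\notin C_1$). A function $f$ on $\mathrm{GF}(q)$ is APN if $\max_{a\in\mathrm{GF}(q)^*}\max_{b\in\mathrm{GF}(q)}|\{x\in\mathrm{GF}(q): f(x+a)-f(x)=b\}|=2$. *)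

(* Defs.v *)
From HB Require Import structures.
From mathcomp Require Import all_boot all_order all_algebra.
Set Implicit Arguments. Unset Strict Implicit. Unset Printing Implicit Defensive.
Import GRing.Theory.
Local Open Scope ring_scope.

Definition F3_to (F : fieldType) (z : 'F_3) : F := (nat_of_ord z)%:R.

Definition is_minpoly_F3 (F : fieldType) (a : F) (p : {poly 'F_3}) : Prop :=
  [/\ p \is monic, root (map_poly (@F3_to F) p) a &
      forall q : {poly 'F_3}, q != 0 -> root (map_poly (@F3_to F) q) a ->
        (size p <= size q)%N].

Definition APN (F : finFieldType) (f : F -> F) : Prop :=
  (\max_(a : F | a != 0%R) \max_(b : F) #|[set x : F | (f (x + a) - f x)%R == b]|)%N = 2%N.

Definition word_poly (n : nat) (c : 'rV['F_3]_n) : {poly 'F_3} :=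
  \sum_(i < n) (c ord0 i)%:P * 'X^i.

Definition cyclic_code (n : nat) (g : {poly 'F_3}) : {set 'rV['F_3]_n} :=
  [set c | g %| word_poly c].

Definition hweight (n : nat) (c : 'rV['F_3]_n) : nat := #|[set i | c ord0 i != 0]|.

Definition code_dim (n : nat) (C : {set 'rV['F_3]_n}) : nat :=
  \dim (span (enum C)).

Definition has_min_dist (n : nat) (C : {set 'rV['F_3]_n}) (d : nat) : Prop :=
  (exists2 c, c \in C & (c != 0) && (hweight c == d)) /\
  (forall c, c \in C -> c != 0 -> (d <= hweight c)%N).

(* Main.v *)
Require Import Defs.
From HB Require Import structures.
From mathcomp Require Import all_boot all_order all_algebra all_field.
From mathcomp Require Import ring zify.
From Stdlib Require Import Lia.
Set Implicit Arguments. Unset Strict Implicit. Unset Printing Implicit Defensive.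
Import GRing.Theory.
Local Open Scope ring_scope.

Lemma valF3D (a b : 'F_3) : val (a + b) = ((val a + val b) %% 3)%N. Proof. by []. Qed.
Lemma valF3M (a b : 'F_3) : val (a * b) = ((val a * val b) %% 3)%N. Proof. by []. Qed.
Lemma valF3N (a : 'F_3) : val (- a) = ((3 - val a) %% 3)%N. Proof. by []. Qed.
Lemma valF31 : val (1 : 'F_3) = 1%N. Proof. by []. Qed.

Lemma card3 (T : finType) (x y z : T) : x != y -> x != z -> y != z ->
  #|[set x; y; z]| = 3%N.
Proof.
move=> xy xz yz; rewrite -setUA cardsU1 cards2 yz !inE negb_or xy xz //.
Qed.

Section Word.
Variable k : nat.
Implicit Types c u v : 'rV['F_3]_k.

Definition poly_row (p : {poly 'F_3}) : 'rV['F_3]_k := \row_(i < k) p`_i.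

Lemma coef_word_gen c j : (word_poly c)`_j = \sum_(i < k) c ord0 i * (j == i)%:R.
Proof. by rewrite /word_poly coef_sum; apply: eq_bigr => i _; rewrite coefCM coefXn. Qed.

Lemma coef_word c (i : 'I_k) : (word_poly c)`_i = c ord0 i.
Proof.
rewrite coef_word_gen (bigD1 i) //= eqxx mulr1 big1 ?addr0 // => l li.
by rewrite eq_sym (inj_eq val_inj) (negbTE li) mulr0.
Qed.

Lemma coef_word_ge c j : (k <= j)%N -> (word_poly c)`_j = 0.
Proof.
move=> kj; rewrite coef_word_gen big1 // => l _.
by rewrite (gtn_eqF (leq_trans (ltn_ord l) kj)) mulr0.
Qed.

Lemma size_word c : (size (word_poly c) <= k)%N.
Proof. by apply/leq_sizeP => j; exact: coef_word_ge. Qed.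

Lemma word_polyK (p : {poly 'F_3}) : (size p <= k)%N -> word_poly (poly_row p) = p.
Proof.
move=> sp; apply/polyP => j; case: (ltnP j k) => h.
  by rewrite -[j]/(val (Ordinal h)) coef_word mxE.
by rewrite coef_word_ge // nth_default // (leq_trans sp h).
Qed.

Lemma poly_rowK c : poly_row (word_poly c) = c.
Proof. by apply/rowP => i; rewrite mxE coef_word. Qed.

Lemma word_poly_inj : injective (@word_poly k).
Proof. by move=> u v E; rewrite -(poly_rowK u) E poly_rowK. Qed.

Lemma word_polyZD (a : 'F_3) u v : word_poly (a *: u + v) = a *: word_poly u + word_poly v.
Proof.
rewrite /word_poly scaler_sumr -big_split; apply: eq_bigr => i _ /=.
by rewrite !mxE polyCD polyCM mulrDl -mulrA mul_polyC.
Qed.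

Lemma word_poly0' : word_poly (0 : 'rV['F_3]_k) = 0.
Proof. by rewrite /word_poly big1 // => i _; rewrite mxE mul0r. Qed.

Lemma word_polyZ (a : 'F_3) u : word_poly (a *: u) = a *: word_poly u.
Proof. by rewrite -[a *: u]addr0 word_polyZD word_poly0' addr0. Qed.

Lemma word_poly0 : word_poly (0 : 'rV['F_3]_k) = 0.
Proof. by rewrite /word_poly big1 // => i _; rewrite mxE mul0r. Qed.

Lemma word_polyB u v : word_poly (u - v) = word_poly u - word_poly v.
Proof.
have -> : u - v = (-1) *: v + u by rewrite scaleN1r addrC.
by rewrite word_polyZD scaleN1r addrC.
Qed.

End Word.

Lemma F3_cube (c : 'F_3) : c ^+ 3 = c.
Proof. by apply/val_inj; case: c => [[|[|[|k]]] hk]. Qed.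

Lemma grow (T : finType) (A : {set T}) k : (#|A| <= k <= #|T|)%N ->
  exists2 B : {set T}, A \subset B & #|B| = k.
Proof.
case/andP => h1 h2.
move: {2}(k - #|A|)%N (erefl (k - #|A|)%N) => d.
elim: d A h1 => [|d IH] A h1 hd.
  by exists A => //; apply/eqP; rewrite eqn_leq h1 -subn_eq0 hd.
have : (0 < #|~: A|)%N by move: (cardsC A) hd; lia.
case/card_gt0P => x; rewrite inE => xA.
have [||B sB cB] := IH (x |: A).
- by rewrite cardsU1 xA; move: hd; lia.
- by rewrite cardsU1 xA; move: hd; lia.
exists B => //; apply: subset_trans sB; exact: subsetUr.
Qed.

Lemma card3_set (T : finType) (B : {set T}) : #|B| = 3%N ->
  exists i1, exists i2, exists i3, [/\ i1 != i2, i1 != i3, i2 != i3 & B = i1 |: (i2 |: [set i3])].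
Proof.
move=> cB; have : (0 < #|B|)%N by rewrite cB.
case/card_gt0P => i1 i1B.
have : #|B :\ i1| == 2%N by move: (cardsD1 i1 B); rewrite i1B cB; case: #|B :\ i1| => // [[|[|]]].
case/cards2P => i2 [i3 [d23 E]].
have : i1 \notin B :\ i1 by rewrite !inE eqxx.
rewrite E !inE negb_or => /andP [d12 d13].
exists i1, i2, i3; split => //; by rewrite -(setD1K i1B) E.
Qed.

Section Main.
Variable F : finFieldType.
Hypothesis H3 : 3%N \in [pchar F].

Lemma F3_3 : 3%:R = 0 :> F. Proof. exact: pcharf0 H3. Qed.

Lemma natr_mod3 k : (k %% 3)%:R = k%:R :> F.
Proof. by rewrite {2}(divn_eq k 3) natrD natrM F3_3 mulr0 add0r. Qed.

Lemma F3_add : zmod_morphism (F3_to F).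
Proof.
move=> a b; rewrite /F3_to valF3D natr_mod3 natrD valF3N natr_mod3 natrB; last exact: (ltnW (ltn_ord b)).
by rewrite F3_3 sub0r.
Qed.

Lemma F3_mul : monoid_morphism (F3_to F).
Proof.
split; first by rewrite /F3_to valF31.
by move=> a b; rewrite /F3_to valF3M natr_mod3 natrM.
Qed.

HB.instance Definition _ := GRing.isZmodMorphism.Build _ _ (F3_to F) F3_add.
HB.instance Definition _ := GRing.isMonoidMorphism.Build _ _ (F3_to F) F3_mul.

Lemma two_m1 : 1 + 1 = -1 :> F.
Proof. apply/eqP; rewrite -subr_eq0 opprK -F3_3; apply/eqP; ring. Qed.

Lemma one_neq_m1 : (1 : F) != -1.
Proof.
apply/negP => /eqP h; have : (1 + 1 : F) = 0 by rewrite {2}h subrr.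
by rewrite two_m1 => /eqP; rewrite oppr_eq0 oner_eq0.
Qed.

Variable e : nat.
Hypothesis e_gt0 : (0 < e)%N.
Hypothesis Happ : APN (fun x : F => x ^+ e).

Lemma f0 : (0 : F) ^+ e = 0. Proof. by rewrite expr0n eqn0Ngt e_gt0. Qed.

Lemma apn_le2 (a b : F) : a != 0 -> (#|[set x : F | ((x + a) ^+ e - x ^+ e)%R == b]| <= 2)%N.
Proof.
move=> a0; move: (eq_leq Happ) => /bigmax_leqP /(_ a a0) /bigmax_leqP /(_ b isT).
by [].
Qed.

Lemma no3sol (a x y z : F) : a != 0 -> x != y -> x != z -> y != z ->
  (x + a) ^+ e - x ^+ e = (y + a) ^+ e - y ^+ e ->
  (x + a) ^+ e - x ^+ e = (z + a) ^+ e - z ^+ e -> False.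
Proof.
move=> a0 xy xz yz E1 E2.
have := apn_le2 ((x + a) ^+ e - x ^+ e) a0.
have : [set x; y; z] \subset [set t : F | (t + a) ^+ e - t ^+ e == (x + a) ^+ e - x ^+ e].
  apply/subsetP => t; rewrite !inE.
  by case/orP=> [/orP [] |] /eqP ->; apply/eqP; rewrite // ?E1 ?E2.
by move/subset_leq_card; rewrite card3 // => h1 h2; have := leq_trans h1 h2.
Qed.

Lemma e_even : ~~ odd e.
Proof.
apply/negP => oe.
have fN x : (- x) ^+ e = - x ^+ e by rewrite exprNn -signr_odd oe expr1 mulN1r.
apply: (@no3sol 1 0 1 (-1)).
- exact: oner_neq0.
- by rewrite eq_sym oner_neq0.
- by rewrite eq_sym oppr_eq0 oner_neq0.
- exact: one_neq_m1.
- by rewrite two_m1 fN expr1n f0 add0r expr1n subr0 -opprD two_m1 opprK.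
- by rewrite addNr f0 fN expr1n add0r expr1n subr0 sub0r opprK.
Qed.

Lemma no3roots (z1 z2 z3 : F) : z1 != z2 -> z1 != z3 -> z2 != z3 ->
  z1 != 1 -> z2 != 1 -> z3 != 1 ->
  z1 ^+ e = 1 -> z2 ^+ e = 1 -> z3 ^+ e = 1 -> False.
Proof.
move=> d12 d13 d23 n1 n2 n3 E1 E2 E3.
have D (z : F) : z != 1 -> z ^+ e = 1 -> ((z - 1)^-1 + 1) ^+ e - ((z - 1)^-1) ^+ e = 0.
  move=> nz Ez; have h : (z - 1)^-1 + 1 = z * (z - 1)^-1.
    have nz' : z - 1 != 0 by rewrite subr_eq0.
    by field.
  by rewrite h exprMn Ez mul1r subrr.
have inj (z z' : F) : z - 1 != 0 -> z' - 1 != 0 -> z != z' -> (z - 1)^-1 != (z' - 1)^-1.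
  move=> _ _ dz; apply: contra dz => /eqP /invr_inj /eqP.
  by rewrite (inj_eq (addIr _)).
have s (z : F) : z != 1 -> z - 1 != 0 by rewrite subr_eq0.
apply: (@no3sol 1 (z1 - 1)^-1 (z2 - 1)^-1 (z3 - 1)^-1); rewrite ?oner_neq0 ?inj ?s //.
- by rewrite D // D.
- by rewrite D // D.
Qed.
Variable m : nat.
Hypothesis Hcard : #|F| = (3 ^ m)%N.
Variable alpha : F.
Hypothesis Hprim : (3 ^ m - 1)%N.-primitive_root alpha.
Hypothesis He : (1 < e < 3 ^ m - 1)%N.

Local Notation n := (3 ^ m - 1)%N.

Lemma m_ge2 : (2 <= m)%N.
Proof.
rewrite leqNgt; apply/negP => h.
have : (3 ^ m <= 3 ^ 1)%N by rewrite leq_exp2l.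
move: He; rewrite expn1; lia.
Qed.

Lemma three_m : (3 ^ m = 3 * 3 ^ m.-1)%N.
Proof. by rewrite -expnS prednK // (leq_trans _ m_ge2). Qed.

Lemma K_ge3 : (3 <= 3 ^ m.-1)%N.
Proof.
have := m_ge2; case: m => [|[|k]] //= _.
by rewrite expnS leq_pmulr // expn_gt0.
Qed.

Lemma n_gt0 : (0 < n)%N.
Proof. by rewrite three_m; have := K_ge3; lia. Qed.

Lemma alpha_neq0 : alpha != 0.
Proof.
apply/negP => /eqP a0; have := prim_expr_order Hprim.
by rewrite a0 expr0n; case: (n) n_gt0 => // k _ /eqP; rewrite eq_sym oner_eq0.
Qed.

Lemma alpha_inj i j : (i < n)%N -> (j < n)%N -> alpha ^+ i = alpha ^+ j -> i = j.
Proof.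
by move=> hi hj /eqP; rewrite (eq_prim_root_expr Hprim) !modn_small // => /eqP.
Qed.

Lemma alpha_pow1 k : alpha ^+ k = 1 -> (n %| k)%N.
Proof.
move=> h; have : alpha ^+ k == alpha ^+ 0 by rewrite h expr0.
by rewrite (eq_prim_root_expr Hprim) mod0n.
Qed.

Lemma alpha_surj x : x != 0 -> exists2 i, (i < n)%N & x = alpha ^+ i.
Proof.
move=> x0.
pose S := [set alpha ^+ (val i) | i : 'I_n].
have cS : #|S| = n.
  rewrite card_imset ?card_ord // => i j /alpha_inj h; apply/val_inj/h; exact: ltn_ord.
have cT : #|[set~ (0 : F)]| = n by rewrite cardsC1 Hcard subn1.
have sub : S \subset [set~ 0].
  apply/subsetP => y /imsetP [i _ ->]; rewrite !inE expf_neq0 //; exact: alpha_neq0.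
have := (subset_cardP (etrans cS (esym cT)) sub x); rewrite !inE x0 => /imsetP [i _ ->].
by exists (val i) => //; exact: ltn_ord.
Qed.

Lemma coprime3n : coprime 3 n.
Proof.
rewrite prime_coprime //; apply/negP => h.
have h2 : (3 %| 3 ^ m)%N by rewrite three_m dvdn_mulr.
have : (3 %| 3 ^ m - n)%N by rewrite dvdn_sub.
by rewrite subKn ?expn_gt0.
Qed.

Lemma beta_no1 t : (0 < t)%N -> (t < n %/ 2)%N -> (alpha ^+ e) ^+ t != 1.
Proof.
move=> t0 tn; apply/negP => /eqP E.
have ng := n_gt0.
pose z := alpha ^+ t.
have zk k : (0 < k)%N -> (k * t < n)%N -> z ^+ k != 1.
  move=> k0 kt; apply/negP => /eqP; rewrite -exprM mulnC => /alpha_pow1 h.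
  have : (n <= k * t)%N by apply: dvdn_leq => //; rewrite muln_gt0 k0.
  by rewrite leqNgt kt.
have z3 : z ^+ 3 != 1.
  apply/negP => /eqP; rewrite -exprM => /alpha_pow1.
  rewrite Gauss_dvdl; last by rewrite coprime_sym coprime3n.
  move/(dvdn_leq t0); have := leq_trans tn (leq_div _ _); rewrite leqNgt => /negP; exact.
have z1 : z != 1 by rewrite -[z]expr1 zk // mul1n (leq_trans tn (leq_div _ _)).
have z2 : z ^+ 2 != 1 by rewrite zk //; move: tn; lia.
have zn0 : z != 0 by rewrite expf_neq0 // alpha_neq0.
have zE k : (z ^+ k) ^+ e = 1 by rewrite /z exprAC [alpha ^+ t ^+ e]exprAC E expr1n.
apply: (@no3roots z (z ^+ 2) (z ^+ 3)); rewrite ?zE //.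
- apply: contra z1 => /eqP h; apply/eqP; apply: (mulfI zn0); by rewrite mulr1 -expr2 -h.
- apply: contra z2 => /eqP h; apply/eqP; apply: (mulfI zn0); by rewrite mulr1 -exprS -h.
- apply: contra z1 => /eqP h; apply/eqP; apply: (mulfI (expf_neq0 2 zn0)); by rewrite mulr1 -exprSr -h.
- by have := zE 1%N; rewrite expr1.
Qed.

Lemma beta_neq0 : alpha ^+ e != 0.
Proof. by rewrite expf_neq0 // alpha_neq0. Qed.

Lemma beta_inj i j : (i < n %/ 2)%N -> (j < n %/ 2)%N ->
  (alpha ^+ e) ^+ i = (alpha ^+ e) ^+ j -> i = j.
Proof.
wlog ij : i j / (i <= j)%N.
  move=> H hi hj E; case: (leqP i j) => [h|h]; first exact: H.
  by apply/esym/H => //; exact: ltnW.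
move=> hi hj E; case: (ltngtP i j) => // h; last by move: ij; rewrite leqNgt h.
exfalso; have := @beta_no1 (j - i)%N; rewrite subn_gt0 h => /(_ isT).
have -> : (j - i < n %/ 2)%N by apply: leq_ltn_trans hj; exact: leq_subr.
move=> /(_ isT) /negP; apply; apply/eqP.
apply: (mulfI (expf_neq0 i beta_neq0)); rewrite mulr1 -exprD subnKC //; exact: ltnW.
Qed.

Definition ev (p : {poly 'F_3}) (x : F) := (map_poly (F3_to F) p).[x].

Lemma evD p q x : ev (p + q) x = ev p x + ev q x.
Proof. by rewrite /ev rmorphD hornerD. Qed.
Lemma evB p q x : ev (p - q) x = ev p x - ev q x.
Proof. by rewrite /ev rmorphB hornerD hornerN. Qed.
Lemma evM p q x : ev (p * q) x = ev p x * ev q x.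
Proof. by rewrite /ev rmorphM hornerM. Qed.
Lemma evXn i x : ev 'X^i x = x ^+ i.
Proof. by rewrite /ev map_polyXn hornerXn. Qed.

Lemma ev_word k (c : 'rV['F_3]_k) x :
  ev (word_poly c) x = \sum_(i < k) F3_to F (c ord0 i) * x ^+ i.
Proof.
rewrite /ev /word_poly rmorph_sum horner_sum; apply: eq_bigr => i _.
by rewrite rmorphM /= map_polyC map_polyXn hornerCM hornerXn.
Qed.

Lemma minpoly_neq0 (x : F) p : is_minpoly_F3 x p -> p != 0.
Proof. by case=> /monic_neq0. Qed.

Lemma minpoly_dvd (x : F) p q : is_minpoly_F3 x p -> ev q x = 0 -> p %| q.
Proof.
move=> mp; have [mon rt mn] := mp; move=> hq.
apply/modp_eq0P; apply/eqP; apply/negP => /negP nz.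
have : ev (q %% p) x = 0.
  have rtx : ev p x = 0 by exact/rootP.
  by move: hq; rewrite {1}(divp_eq q p) evD evM rtx mulr0 add0r.
move=> /eqP /(mn _ nz); rewrite leqNgt ltn_modp (minpoly_neq0 mp) //.
Qed.

Lemma size_ub (x : F) p : is_minpoly_F3 x p -> (size p <= m.+1)%N.
Proof.
move=> mp.
pose phi (c : 'rV['F_3]_(m.+1)) := ev (word_poly c) x.
have : ~~ injectiveb phi.
  apply/negP => /injectiveP inj; have := leq_card _ inj.
  by rewrite card_mx card_Fp // Hcard mul1n leq_exp2l // ltnn.
case/injectivePn => c [c' cc' E].
have nz : word_poly (c - c') != 0.
  by rewrite word_polyB subr_eq0; apply: contra cc' => /eqP /word_poly_inj ->.
have r : root (map_poly (F3_to F) (word_poly (c - c'))) x.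
  by apply/eqP; rewrite -/(ev _ x) word_polyB evB; rewrite /phi in E; rewrite E subrr.
by case: mp => _ _ mn; exact: leq_trans (mn _ nz r) (size_word _).
Qed.

Lemma size_lb (x : F) q k : q != 0 -> ev q x = 0 ->
  (forall i j, (i < k)%N -> (j < k)%N -> x ^+ i = x ^+ j -> i = j) ->
  (k <= 3 ^ (size q).-1)%N.
Proof.
move=> qnz qx hinj.
set d := (size q).-1.
pose phi (c : 'rV['F_3]_d) := ev (word_poly c) x.
have sub : [set x ^+ (val i) | i : 'I_k] \subset [set phi c | c : 'rV['F_3]_d].
  apply/subsetP => y /imsetP [i _ ->]; apply/imsetP; exists (poly_row d ('X^i %% q)) => //.
  rewrite /phi word_polyK.
    by move: (evXn i x); rewrite {1}(divp_eq 'X^i q) evD evM qx mulr0 add0r.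
  have h := ltn_modp ('X^i) q; rewrite qnz in h; rewrite /d.
  by move: h; case: (size q) => //.
have := subset_leq_card sub; rewrite card_imset ?card_ord.
  move=> h; apply: (leq_trans h); apply: (leq_trans (leq_imset_card _ _)).
  by rewrite card_mx card_Fp // mul1n.
by move=> i j /hinj h; apply/val_inj/h; exact: ltn_ord.
Qed.

Lemma minpoly_size (x : F) p k : is_minpoly_F3 x p -> (3 ^ m.-1 < k)%N ->
  (forall i j, (i < k)%N -> (j < k)%N -> x ^+ i = x ^+ j -> i = j) ->
  size p = m.+1.
Proof.
move=> mp km hinj; apply/anti_leq; rewrite (size_ub mp) /=.
rewrite ltnNge; apply/negP => h.
have [mon rt _] := mp.
have := size_lb (minpoly_neq0 mp) (rootP rt) hinj.
have : (3 ^ (size p).-1 <= 3 ^ m.-1)%N.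
  by apply: leq_pexp2l => //; rewrite -!subn1; apply: leq_sub2r.
move=> h1 h2; have := leq_trans km (leq_trans h2 h1); by rewrite ltnn.
Qed.

Lemma size_p1 p1 : is_minpoly_F3 alpha p1 -> size p1 = m.+1.
Proof.
move=> mp; apply: (minpoly_size mp _ (k := n)).
  by rewrite three_m; have := K_ge3; lia.
exact: alpha_inj.
Qed.

Lemma size_pe pe : is_minpoly_F3 (alpha ^+ e) pe -> size pe = m.+1.
Proof.
move=> mp; apply: (minpoly_size mp _ (k := n %/ 2)).
  by rewrite three_m; have := K_ge3; lia.
exact: beta_inj.
Qed.

Lemma ev_cube p (x : F) : ev p (x ^+ 3) = (ev p x) ^+ 3.
Proof.
have E : map_poly (pFrobenius_aut H3) (map_poly (F3_to F) p) = map_poly (F3_to F) p.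
  rewrite -map_poly_comp; apply: eq_map_poly => c /=.
  by rewrite pFrobenius_autE -rmorphXn F3_cube.
by rewrite /ev -[in LHS]E -!(pFrobenius_autE H3) horner_map.
Qed.

Lemma ev_pow3 p (x : F) j : ev p x = 0 -> ev p (x ^+ (3 ^ j)) = 0.
Proof.
move=> h; elim: j => [|j IH]; first by rewrite expn0 expr1.
by rewrite expnSr exprM ev_cube IH expr0n.
Qed.

Lemma frobD (x y : F) j : (x + y) ^+ (3 ^ j) = x ^+ (3 ^ j) + y ^+ (3 ^ j).
Proof.
elim: j => [|j IH]; first by rewrite expn0 !expr1.
by rewrite expnSr !exprM IH -!(pFrobenius_autE H3) rmorphD.
Qed.

Lemma frob_notAPN j : (forall x : F, x ^+ e = x ^+ (3 ^ j)) -> False.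
Proof.
move=> hf.
have D (x : F) : (x + 1) ^+ e - x ^+ e = 1 by rewrite !hf frobD expr1n addrAC subrr add0r.
apply: (@no3sol 1 0 1 (-1)); rewrite ?D //.
- exact: oner_neq0.
- by rewrite eq_sym oner_neq0.
- by rewrite eq_sym oppr_eq0 oner_neq0.
- exact: one_neq_m1.
Qed.

Lemma lt3n i : (i < m)%N -> (3 ^ i < n)%N.
Proof.
move=> im; have : (3 ^ i <= 3 ^ m.-1)%N.
  by apply: leq_pexp2l => //; rewrite -ltnS prednK // (leq_trans _ m_ge2).
by rewrite three_m; have := K_ge3; lia.
Qed.

Lemma beta_not_root p1 : is_minpoly_F3 alpha p1 -> ev p1 (alpha ^+ e) != 0.
Proof.
move=> mp; apply/negP => /eqP hb.
have [mon rt _] := mp; have ra : ev p1 alpha = 0 by exact/rootP.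
pose rs := [seq alpha ^+ (3 ^ j) | j <- iota 0 m].
have allr : all (root (map_poly (F3_to F) p1)) (alpha ^+ e :: rs).
  rewrite /=; apply/andP; split; first exact/eqP.
  by apply/allP => y /mapP [j _ ->]; apply/eqP; exact: ev_pow3.
have urs : uniq rs.
  rewrite map_inj_in_uniq ?iota_uniq // => i j; rewrite !mem_iota !add0n => hi hj.
  by move/(alpha_inj (lt3n hi) (lt3n hj)); apply: expnI.
case: (boolP (alpha ^+ e \in rs)) => [inr|ninr].
  case/mapP: inr => j; rewrite mem_iota add0n => /andP [_ jm] hj.
  apply: (@frob_notAPN j) => x.
  have [->|xnz] := eqVneq x 0; first by rewrite f0 expr0n expn_eq0.
  have [i _ ->] := alpha_surj xnz.
  by rewrite exprAC hj exprAC.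
have := @max_poly_roots _ (map_poly (F3_to F) p1) _ _ allr.
rewrite map_poly_eq0 (minpoly_neq0 mp) /= ninr urs size_map_poly (size_p1 mp).
by rewrite size_map size_iota ltnn => /(_ isT isT).
Qed.

Lemma minpoly_factor (x : F) p h g : is_minpoly_F3 x p -> p = h * g -> ev g x != 0 ->
  (size g <= 1)%N.
Proof.
move=> mp pE gx.
have pnz := minpoly_neq0 mp.
have hnz : h != 0 by apply: contra pnz => /eqP h0; rewrite pE h0 mul0r.
have gnz : g != 0 by apply: contra pnz => /eqP g0; rewrite pE g0 mulr0.
have [_ rt mn] := mp.
have hx : root (map_poly (F3_to F) h) x.
  have : ev p x = 0 by exact/rootP.
  by rewrite pE evM => /eqP; rewrite mulf_eq0 (negbTE gx) orbF.
have := mn _ hnz hx; rewrite pE size_mul // -subn1.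
have : (0 < size h)%N by rewrite size_poly_gt0.
set u := size h; set v := size g; move=> a b; lia.
Qed.

Lemma coprime_p1pe p1 pe : is_minpoly_F3 alpha p1 -> is_minpoly_F3 (alpha ^+ e) pe ->
  coprimep p1 pe.
Proof.
move=> m1 me; rewrite coprimep_def.
set g := gcdp p1 pe.
have gnz : g != 0 by rewrite gcdp_eq0 negb_and (minpoly_neq0 m1).
case: (eqVneq (ev g alpha) 0) => ga.
  have d1 : p1 %| pe := dvdp_trans (minpoly_dvd m1 ga) (dvdp_gcdr _ _).
  have := minpoly_factor me (esym (divpK d1)) (beta_not_root m1).
  by rewrite (size_p1 m1) ltnS leqn0 => /eqP m0; have := m_ge2; rewrite m0.
have := minpoly_factor m1 (esym (divpK (dvdp_gcdl p1 pe))) ga.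
rewrite -/g leq_eqVlt ltnS leqn0 size_poly_eq0 (negbTE gnz) orbF.
exact.
Qed.

Lemma eq_from (X Y Z k : F) : X - Y = k * Z -> Z = 0 -> X = Y.
Proof. by move=> E Z0; apply/eqP; rewrite -subr_eq0 E Z0 mulr0. Qed.

Lemma eq3 (X Y Z : F) : X - Y = 3%:R * Z -> X = Y.
Proof. by rewrite F3_3 mul0r => /eqP; rewrite subr_eq0 => /eqP. Qed.

Lemma fN (x : F) : (- x) ^+ e = x ^+ e.
Proof. by rewrite exprNn -signr_odd (negbTE e_even) expr0 mul1r. Qed.

Lemma W2b (u v : F) : u != 0 -> u + v = 0 -> u ^+ e + v ^+ e = 0 -> False.
Proof.
move=> nu h1 h2.
have vE : v = - u by apply: (addrI u); rewrite h1 subrr.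
move: h2; rewrite vE fN -mulr2n -mulr_natl => /eqP; rewrite mulf_eq0 expf_eq0 (negbTE nu) andbF orbF.
by rewrite -[2%:R]/(1 + 1 : F) two_m1 oppr_eq0 oner_eq0.
Qed.

Lemma W3A (u v w : F) : u != 0 -> v != 0 -> w != 0 -> u != v ->
  u + v = w -> u ^+ e + v ^+ e = w ^+ e -> False.
Proof.
move=> nu nv nw duv h1 h2.
set t := u / v.
have tnz : t != 0 by rewrite mulf_neq0 ?invr_eq0.
have tv : t * v = u by rewrite /t mulfVK.
have P1 : (0 + u) ^+ e - 0 ^+ e = u ^+ e by rewrite add0r f0 subr0.
have P2 : (v + u) ^+ e - v ^+ e = u ^+ e by rewrite [v + u]addrC h1 -h2 addrK.
have P3 : (t * u + u) ^+ e - (t * u) ^+ e = u ^+ e.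
  have -> : t * u + u = t * w by rewrite -h1 mulrDr tv addrC.
  rewrite !exprMn -mulrBr -h2 [u ^+ e + _]addrC addrK.
  by rewrite -mulrA -exprMn mulVf // expr1n mulr1.
apply: (@no3sol u 0 v (t * u)) => //.
- by rewrite eq_sym.
- by rewrite eq_sym mulf_neq0.
- apply/negP => /eqP vE.
  have vv : v * v = u * u by rewrite {1}vE -mulrA [u * v]mulrC mulrA tv.
  have : (v - u) * (v + u) = v * v - u * u by ring.
  rewrite vv subrr => /eqP; rewrite mulf_eq0 subr_eq0 eq_sym (negbTE duv) /=.
  by rewrite [v + u]addrC h1 (negbTE nw).
- by rewrite P1 P2.
- by rewrite P1 P3.
Qed.

Lemma W3B (u v w : F) : u != v -> u != w -> v != w ->
  u + v + w = 0 -> u ^+ e + v ^+ e + w ^+ e = 0 -> False.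
Proof.
move=> duv duw dvw h1 h2.
have wE : w = - u - v by apply: (addrI (u + v)); rewrite h1; ring.
have fwE : w ^+ e = - u ^+ e - v ^+ e.
  by apply: (addrI (u ^+ e + v ^+ e)); rewrite h2; ring.
have a0 : v - u != 0 by rewrite subr_eq0 eq_sym.
have e1 : u + (v - u) = v by rewrite addrC subrK.
have e2 : v + (v - u) = w by apply: (@eq3 _ _ v); rewrite wE; ring.
have e3 : w + (v - u) = u by apply: (@eq3 _ _ (- u)); rewrite wE; ring.
apply: (@no3sol (v - u) u v w) => //; rewrite ?e1 ?e2 ?e3 fwE;
  first [apply: (@eq3 _ _ (v ^+ e)); ring | apply: (@eq3 _ _ (- u ^+ e)); ring].
Qed.

Lemma two_F : (2%:R : F) = -1.
Proof. by rewrite -[2%:R]/(1 + 1 : F) two_m1. Qed.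

Ltac solve_eq h := first [ apply: (@eq_from _ _ _ 1 _ h); ring
                         | apply: (@eq_from _ _ _ (-1) _ h); ring ].

Lemma three_term (u v w : F) (c1 c2 c3 : 'F_3) :
  u != 0 -> v != 0 -> w != 0 -> u != v -> u != w -> v != w ->
  F3_to F c1 * u + F3_to F c2 * v + F3_to F c3 * w = 0 ->
  F3_to F c1 * u ^+ e + F3_to F c2 * v ^+ e + F3_to F c3 * w ^+ e = 0 ->
  [&& c1 == 0, c2 == 0 & c3 == 0].
Proof.
move=> nu nv nw duv duw dvw.
case: c1 => [[|[|[|k1]]] i1] //; case: c2 => [[|[|[|k2]]] i2] //;
  case: c3 => [[|[|[|k3]]] i3] //; rewrite /F3_to /= ?two_F => h1 h2; try done;
exfalso;
first [ apply: (negP nu); apply/eqP; solve_eq h1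
      | apply: (negP nv); apply/eqP; solve_eq h1
      | apply: (negP nw); apply/eqP; solve_eq h1
      | apply: (negP duv); apply/eqP; solve_eq h1
      | apply: (negP duw); apply/eqP; solve_eq h1
      | apply: (negP dvw); apply/eqP; solve_eq h1
      | apply: (@W2b u v nu); [solve_eq h1 | solve_eq h2]
      | apply: (@W2b u w nu); [solve_eq h1 | solve_eq h2]
      | apply: (@W2b v w nv); [solve_eq h1 | solve_eq h2]
      | apply: (@W3A u v w nu nv nw duv); [solve_eq h1 | solve_eq h2]
      | apply: (@W3A u w v nu nw nv duw); [solve_eq h1 | solve_eq h2]
      | apply: (@W3A v w u nv nw nu dvw); [solve_eq h1 | solve_eq h2]
      | apply: (@W3B u v w duv duw dvw); [solve_eq h1 | solve_eq h2] ].
Qed.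

Variables p1 pe : {poly 'F_3}.
Hypothesis m1 : is_minpoly_F3 alpha p1.
Hypothesis me : is_minpoly_F3 (alpha ^+ e) pe.

Local Notation g := (p1 * pe).
Local Notation C := (cyclic_code n g).

Lemma g_nz : g != 0.
Proof. by rewrite mulf_neq0 // (minpoly_neq0 m1, minpoly_neq0 me). Qed.

Lemma size_g : size g = (2 * m).+1.
Proof.
rewrite size_mul ?(minpoly_neq0 m1) ?(minpoly_neq0 me) // (size_p1 m1) (size_pe me).
by rewrite addSn /=; lia.
Qed.

Lemma exp3_ge m' : (2 * m'.+1 <= 3 ^ m' .+1 - 1)%N.
Proof. elim: m' => [|k IH] //; rewrite expnS; move: IH; lia. Qed.

Lemma n_ge2m : (2 * m <= n)%N.
Proof. have := m_ge2; case: m => [|k] // _; exact: exp3_ge. Qed.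

Lemma n_ge3 : (3 <= n)%N.
Proof. by rewrite three_m; have := K_ge3; lia. Qed.

Lemma inC c : (c \in C) = (g %| word_poly c).
Proof. by rewrite inE. Qed.

Lemma ev_C c y : c \in C -> (y = alpha \/ y = alpha ^+ e) -> ev (word_poly c) y = 0.
Proof.
rewrite inC => /divpK <- hy; rewrite evM evM.
have [mo1 r1 _] := m1; have [mo2 r2 _] := me.
have e1 : ev p1 alpha = 0 by exact/rootP.
have e2 : ev pe (alpha ^+ e) = 0 by exact/rootP.
by case: hy => ->; [rewrite e1 | rewrite e2]; rewrite !(mulr0, mul0r).
Qed.

Local Notation k := (n - 2 * m)%N.

Lemma card_C : #|C| = (3 ^ k)%N.
Proof.
pose h (v : 'rV['F_3]_k) : 'rV['F_3]_n := poly_row n (g * word_poly v).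
have sz (v : 'rV['F_3]_k) : (size (g * word_poly v)%R <= n)%N.
  apply: leq_trans (size_polyMleq _ _) _; rewrite size_g.
  have := size_word v; have := n_ge2m; lia.
have hinj : injective h.
  move=> u v /(congr1 (@word_poly _)); rewrite /h !word_polyK //.
  by move/(mulfI g_nz)/word_poly_inj.
have -> : C = [set h v | v : 'rV['F_3]_k].
  apply/setP => c; apply/idP/imsetP => [cC | [v _ ->]].
    have gd : g %| word_poly c by rewrite -inC.
    set w := word_poly c %/ g.
    have sw : (size w <= k)%N.
      have [->|wnz] := eqVneq w 0; first by rewrite size_poly0.
      have E : word_poly c = w * g by rewrite /w divpK.
      have := size_word c; rewrite E size_mul ?g_nz // size_g.
      rewrite addnS /=; set a := size w; lia.
    exists (poly_row k w) => //.
    by rewrite /h word_polyK // mulrC divpK // poly_rowK.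
  by rewrite inC /h word_polyK // dvdp_mulr.
by rewrite card_imset // card_mx card_Fp // mul1n.
Qed.

Lemma span_C : (<<enum C>>%VS : {vspace 'rV['F_3]_n}) =i C.
Proof.
move=> x; apply/idP/idP => [xs | xC]; last by apply: memv_span; rewrite mem_enum.
rewrite (coord_span (X := in_tuple (enum C)) xs).
apply: (big_ind (fun y => y \in C)).
- by rewrite inC word_poly0 dvdp0.
- move=> y z; rewrite !inC => hy hz.
  by rewrite -[y]scale1r word_polyZD scale1r dvdp_add.
- move=> i _; rewrite inC.
  rewrite word_polyZ.
  rewrite -mul_polyC dvdp_mull // -inC.
  by rewrite -mem_enum; apply: mem_nth; exact: ltn_ord.
Qed.

Lemma dim_C : code_dim C = k.
Proof.
apply: (@expnI 3) => //.
have := card_vspace (<<enum C>>%VS : {vspace 'rV['F_3]_n}); rewrite card_Fp // => h.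
rewrite /code_dim -h -card_C.
by apply: eq_card => x; rewrite span_C.
Qed.

Lemma alpha_ord_neq (i j : 'I_n) : i != j -> alpha ^+ i != alpha ^+ j.
Proof.
move=> dij; apply: contra dij => /eqP h; apply/eqP/val_inj.
exact: (alpha_inj (ltn_ord i) (ltn_ord j) h).
Qed.

Lemma alpha_ord_nz (i : 'I_n) : alpha ^+ i != 0.
Proof. by rewrite expf_neq0 // alpha_neq0. Qed.

Lemma wt_ge4 c : c \in C -> c != 0 -> (4 <= hweight c)%N.
Proof.
move=> cC cnz; rewrite leqNgt; apply/negP => hw.
set A := [set i | c ord0 i != 0].
have [B sAB cB] : exists2 B : {set 'I_n}, A \subset B & #|B| = 3%N.
  apply: grow; rewrite card_ord n_ge3 andbT.
  by move: hw; rewrite /hweight -/A ltnS.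
have [i1 [i2 [i3 [d12 d13 d23 BE]]]] := card3_set cB.
have z i : i \notin B -> c ord0 i = 0.
  move=> iB; apply/eqP; apply: contraNT iB => ci.
  by apply: (subsetP sAB); rewrite inE.
have red y : ev (word_poly c) y = F3_to F (c ord0 i1) * y ^+ i1 +
    F3_to F (c ord0 i2) * y ^+ i2 + F3_to F (c ord0 i3) * y ^+ i3.
  rewrite ev_word (bigID (mem B)) /= [X in _ + X]big1 ?addr0; last first.
    by move=> i /z ->; rewrite rmorph0 mul0r.
  rewrite BE big_setU1 /=; last by rewrite !inE negb_or d12 d13.
  rewrite big_setU1 /=; last by rewrite !inE d23.
  by rewrite big_set1 addrA.
have h1 := red alpha; rewrite ev_C // in h1; last by left.
have h2 := red (alpha ^+ e); rewrite ev_C // in h2; last by right.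
rewrite ![(alpha ^+ e) ^+ _]exprAC in h2.
have := three_term (alpha_ord_nz i1) (alpha_ord_nz i2) (alpha_ord_nz i3)
  (alpha_ord_neq d12) (alpha_ord_neq d13) (alpha_ord_neq d23) (esym h1) (esym h2).
case/and3P => /eqP c1 /eqP c2 /eqP c3.
move/negP: cnz; apply; apply/eqP/rowP => i; rewrite mxE.
case: (boolP (i \in B)) => [|/z -> //]; rewrite BE !inE.
by case/or3P => /eqP ->; [exact: c1 | exact: c2 | exact: c3].
Qed.

Lemma ap_lemma (P Q R : F) : Q - P = R - Q -> P - R = Q - P.
Proof.
move=> h; have RE : R = Q - P + Q by rewrite h subrK.
by apply: (@eq3 _ _ (P - Q)); rewrite RE; ring.
Qed.

Lemma ne_add (x b : F) : b != 0 -> x != x + b.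
Proof. move=> b0; apply: contra b0 => /eqP h; apply/eqP; apply: (addrI x); by rewrite addr0 -h. Qed.

Lemma y_ne_xa (a x y : F) : a != 0 ->
  (x + a) ^+ e - x ^+ e = (y + a) ^+ e - y ^+ e -> x + a != y.
Proof.
move=> a0 Dxy; apply/negP => /eqP yE; rewrite -yE in Dxy.
have aa : a + a != 0 by rewrite -mulr2n -mulr_natl mulf_eq0 negb_or a0 andbT -[2%:R]/(1 + 1 : F) two_m1 oppr_eq0 oner_eq0.
have e3 : x + a + a + a = x by apply: (@eq3 _ _ a); ring.
apply: (@no3sol a x (x + a) (x + a + a)) => //.
- exact: ne_add.
- by rewrite -addrA ne_add.
- exact: ne_add.
- by rewrite e3; apply/esym/ap_lemma.
Qed.

Lemma nz4 (a x y : F) : a != 0 -> x != y -> x + a != y -> y + a != x ->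
  (x + a) ^+ e - x ^+ e = (y + a) ^+ e - y ^+ e -> x != 0.
Proof.
move=> a0 dxy xay yax Dxy; apply/negP => /eqP x0.
rewrite x0 add0r f0 subr0 in Dxy; rewrite x0 add0r in xay; rewrite x0 in yax dxy.
have yn : y != 0 by rewrite eq_sym.
have d1 : a != y + a.
  by apply: contra yn => /eqP h; apply/eqP; apply: (addIr a); rewrite add0r -h.
have d3 : y + a != y by rewrite eq_sym ne_add.
have := @three_term a (y + a) y 1 (-1) 1 a0 yax yn d1 xay d3.
rewrite !rmorph1 rmorphN rmorph1 !mul1r !mulN1r.
have -> : a + - (y + a) + y = 0 by ring.
have -> : a ^+ e + - (y + a) ^+ e + y ^+ e = 0 by rewrite Dxy; ring.
by move=> /(_ erefl erefl).
Qed.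

Lemma exists_pair : exists a : F, exists x : F, exists y : F,
  [/\ a != 0, x != y & (x + a) ^+ e - x ^+ e = (y + a) ^+ e - y ^+ e].
Proof.
case: (boolP [exists a : F, exists b : F,
   (a != 0) && (1 < #|[set t : F | ((t + a) ^+ e - t ^+ e)%R == b]|)%N]).
  case/existsP => a /existsP [b /andP [h1 /card_gt1P [x [y [xin yin dxy]]]]].
  exists a, x, y; split => //.
  by move: xin yin; rewrite !inE => /eqP -> /eqP ->.
rewrite negb_exists => /forallP H; exfalso.
have hle : (\max_(a : F | a != 0%R) \max_(b : F)
    #|[set t : F | ((t + a) ^+ e - t ^+ e)%R == b]| <= 1)%N.
  apply/bigmax_leqP => a an; apply/bigmax_leqP => b _.
  move: (H a); rewrite negb_exists => /forallP /(_ b).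
  by rewrite an /= -leqNgt.
have HH := Happ; rewrite /APN in HH.
by have := leq_trans (eq_leq (esym HH)) hle.
Qed.

Lemma exists_w4 : exists2 c, c \in C & (c != 0) && (hweight c == 4%N).
Proof.
have [a [x [y [a0 dxy Dxy]]]] := exists_pair.
have nsym (u v : F) : u != v -> v != u by rewrite eq_sym.
have xa_y := y_ne_xa a0 Dxy.
have ya_x := y_ne_xa a0 (esym Dxy).
have na : - a != 0 by rewrite oppr_eq0.
have Dm : (x + a + - a) ^+ e - (x + a) ^+ e = (y + a + - a) ^+ e - (y + a) ^+ e.
  rewrite !addrK; apply: (@oppr_inj); rewrite !opprB; exact: Dxy.
have dxaya : x + a != y + a by rewrite (inj_eq (addIr a)).
have nx := nz4 a0 dxy xa_y ya_x Dxy.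
have ny := nz4 a0 (nsym _ _ dxy) ya_x xa_y (esym Dxy).
have nxa : x + a != 0.
  by apply: (nz4 na dxaya _ _ Dm); rewrite addrK // eq_sym.
have nya : y + a != 0.
  by apply: (nz4 na (nsym _ _ dxaya) _ _ (esym Dm)); rewrite addrK // eq_sym.
have [i1 hi1 E1] := alpha_surj nxa.
have [i2 hi2 E2] := alpha_surj nx.
have [i3 hi3 E3] := alpha_surj nya.
have [i4 hi4 E4] := alpha_surj ny.
have neq (u v : F) (i j : nat) : u != v -> u = alpha ^+ i -> v = alpha ^+ j -> (i == j) = false.
  by move=> duv Eu Ev; apply/negP => /eqP ij; move: duv; rewrite Eu Ev ij eqxx.
have n12 := neq _ _ _ _ (nsym _ _ (ne_add x a0)) E1 E2.
have n13 := neq _ _ _ _ dxaya E1 E3.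
have n14 := neq _ _ _ _ xa_y E1 E4.
have n23 := neq _ _ _ _ (nsym _ _ ya_x) E2 E3.
have n24 := neq _ _ _ _ dxy E2 E4.
have n34 := neq _ _ _ _ (nsym _ _ (ne_add y a0)) E3 E4.
pose P : {poly 'F_3} := 'X^i1 - 'X^i2 - 'X^i3 + 'X^i4.
have evP (z : F) : ev P z = z ^+ i1 - z ^+ i2 - z ^+ i3 + z ^+ i4.
  by rewrite /P evD !evB !evXn.
have rP1 : ev P alpha = 0 by rewrite evP -E1 -E2 -E3 -E4; ring.
have rP2 : ev P (alpha ^+ e) = 0.
  rewrite evP ![(alpha ^+ e) ^+ _]exprAC -E1 -E2 -E3 -E4.
  have h : ((x + a) ^+ e - x ^+ e) - ((y + a) ^+ e - y ^+ e) = 0 by rewrite Dxy subrr.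
  by rewrite -h; ring.
have gP : g %| P.
  by rewrite Gauss_dvdp ?(coprime_p1pe m1 me) // (minpoly_dvd m1 rP1) (minpoly_dvd me rP2).
have coefP j : P`_j = (j == i1)%:R - (j == i2)%:R - (j == i3)%:R + (j == i4)%:R.
  by rewrite /P coefD !coefB !coefXn.
have sP : (size P <= n)%N.
  apply/leq_sizeP => j hj; rewrite coefP.
  by rewrite !gtn_eqF ?(leq_trans _ hj) // !subrr add0r.
pose c := poly_row n P.
have cP : word_poly c = P by rewrite word_polyK.
have cC : c \in C by rewrite inC cP.
have cnz : c != 0.
  apply/negP => /eqP c0; have := congr1 (fun r : 'rV['F_3]_n => r ord0 (Ordinal hi1)) c0.
  by rewrite !mxE /= coefP eqxx n12 n13 n14 !subr0 addr0 => /eqP; rewrite oner_eq0.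
exists c => //; rewrite cnz /= eqn_leq wt_ge4 // andbT.
pose l := [:: Ordinal hi1; Ordinal hi2; Ordinal hi3; Ordinal hi4].
apply: leq_trans (card_size l); apply: subset_leq_card; apply/subsetP => i.
rewrite inE mxE coefP; apply: contraR; rewrite !inE !negb_or => /and4P [h1 h2 h3 h4].
have f1 : (nat_of_ord i == i1) = false by apply: negbTE; exact: h1.
have f2 : (nat_of_ord i == i2) = false by apply: negbTE; exact: h2.
have f3 : (nat_of_ord i == i3) = false by apply: negbTE; exact: h3.
have f4 : (nat_of_ord i == i4) = false by apply: negbTE; exact: h4.
by rewrite f1 f2 f3 f4 !subrr add0r.
Qed.

End Main.

Unset Implicit Arguments.
Theorem theorem5 (m : nat) (F : finFieldType) (alpha : F) (e : nat)
    (p1 pe : {poly 'F_3}) :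
  (0 < m)%N ->
  3%N \in [pchar F] ->
  #|F| = (3 ^ m)%N ->
  (3 ^ m - 1)%N.-primitive_root alpha ->
  (1 < e < 3 ^ m - 1)%N ->
  is_minpoly_F3 alpha p1 ->
  is_minpoly_F3 (alpha ^+ e) pe ->
  APN (fun x : F => x ^+ e) ->
  let C := cyclic_code (3 ^ m - 1) (p1 * pe) in
  code_dim C = (3 ^ m - 1 - 2 * m)%N /\ has_min_dist C 4.
Proof.
move=> m0 H3 Hc Hp He m1 me Happ C.
have e0 : (0 < e)%N by case/andP: He => h _; exact: ltnW.
split; first exact: (dim_C H3 e0 Happ Hc Hp He m1 me).
split; first exact: (exists_w4 H3 e0 Happ Hc Hp He m1 me).
by move=> c cC cnz; apply: (wt_ge4 H3 e0 Happ Hc Hp He m1 me).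
Qed.
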